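(* We have \begin{align*} \sum_{\substack{\alpha\in \mathrm{Par}(R,r),\ \beta\in \mathrm{Par}(S,s)\\ \lambda\in \mathrm{Par}(n-R,c),\ \mu\in \mathrm{Par}(m-S,c)}} \mathrm{Kre}_q(n,m;c,r,s,R,S;\alpha,\beta,\lambda,\mu) &= \mathrm{Nara}_{1}(n,m;c,r,s,R,S),\\ \sum_{R,S\ge0} \mathrm{Nara}_{1}(n,m;c,r,s,R,S) &= \mathrm{Nara}_{2}(n,m;c,r,s),\\ \sum_{r,s\ge0} \mathrm{Nara}_{2}(n,m;c,r,s) &= \mathrm{Nara}_{3}(n,m;c),\\ \sum_{c\ge0} \mathrm{Nara}_{3}(n,m;c) &= \mathrm{Cat}_q(n,m). \end{align*}
   Context: Notation: $[n]_q=\frac{1-q^n}{1-q}$, $[n]_q!=[1]_q\cdots[n]_q$, $\genfrac{[}{]}{0pt}{}{n}{k}_q=\frac{[n]_q!}{[k]_q![n-k]_q!}$. $\mathrm{Par}(n,k)$ is the set of integer partitions of $n$ with $k$ parts; for $\lambda=(1^{m_1},2^{m_2},\dots)$ with $k$ parts, $\genfrac{[}{]}{0pt}{}{k}{\lambda}_q=\frac{[k]_q!}{[m_1]_q![m_2]_q!\cdots}$, and $\tau(\lambda)=\sum_{i\ge1}\lambda'_i\lambda'_{i+1}$ where $\lambda'$ is the conjugate partition. For integers $n,m,c,r,s,R,S\ge0$ and $\alpha\in\mathrm{Par}(R,r)$, $\beta\in\mathrm{Par}(S,s)$, $\lambda\in\mathrm{Par}(n-R,c)$, $\mu\in\mathrm{Par}(m-S,c)$,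 set $X=c(c-1)$, $Y=r(c+r)+s(c+s)$, $Z=r(n-c-R)+s(m-c-S)$, $W=r(R-r)+s(S-s)+c(n-R-c)+c(m-S-c)-\tau(\alpha)-\tau(\beta)-\tau(\lambda)-\tau(\mu)$. Define \[\mathrm{Kre}_q(n,m;c,r,s,R,S;\alpha,\beta,\lambda,\mu)=q^{X+Y+Z+W}\frac{[nm]_q}{[n]_q[m]_q}\frac{[2c]_q}{2}\frac{[n-R]_q[m-S]_q}{[c]_q^2}\genfrac{[}{]}{0pt}{}{n}{r}_q\genfrac{[}{]}{0pt}{}{m}{s}_q\genfrac{[}{]}{0pt}{}{r}{\alpha}_q\genfrac{[}{]}{0pt}{}{s}{\beta}_q\genfrac{[}{]}{0pt}{}{c}{\lambda}_q\genfrac{[}{]}{0pt}{}{c}{\mu}_q,\] \[\mathrm{Nara}_{1}(n,m;c,r,s,R,S)=q^{X+Y+Z}\frac{[nm]_q}{[n]_q[m]_q}\frac{[2c]_q}{2}\genfrac{[}{]}{0pt}{}{n}{r}_q\genfrac{[}{]}{0pt}{}{m}{s}_q\genfrac{[}{]}{0pt}{}{R-1}{r-1}_q\genfrac{[}{]}{0pt}{}{S-1}{s-1}_q\genfrac{[}{]}{0pt}{}{n-R}{c}_q\genfrac{[}{]}{0pt}{}{m-S}{c}_q,\] \[\mathrm{Nara}_{2}(n,m;c,r,s)=q^{X+Y}\frac{[nm]_q}{[n]_q[m]_q}\frac{[2c]_q}{2}\genfrac{[}{]}{0pt}{}{n}{r}_q\genfrac{[}{]}{0pt}{}{m}{s}_q\genfrac{[}{]}{0pt}{}{n}{r+c}_q\genfrac{[}{]}{0pt}{}{m}{s+c}_q,\]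 \[\mathrm{Nara}_{3}(n,m;c)=q^{X}\frac{[nm]_q}{[n]_q[m]_q}\frac{[2c]_q}{2}\genfrac{[}{]}{0pt}{}{2n}{n-c}_q\genfrac{[}{]}{0pt}{}{2m}{m-c}_q,\qquad \mathrm{Cat}_q(n,m)=\frac{[nm]_q}{2[m+n]_q}\genfrac{[}{]}{0pt}{}{2n}{n}_q\genfrac{[}{]}{0pt}{}{2m}{m}_q.\] *)

(* Defs.v *)
From HB Require Import structures.
From mathcomp Require Import all_boot all_order all_algebra fraction.
Set Implicit Arguments. Unset Strict Implicit. Unset Printing Implicit Defensive.
Import Order.TTheory GRing.Theory Num.Theory.
Local Open Scope ring_scope.

Section QDefs.
Variables (F : fieldType) (q : F).

Definition qint (n : nat) : F := \sum_(i < n) q ^+ i.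
Definition qfact (n : nat) : F := \prod_(i < n) qint i.+1.
Definition qbinom (n k : nat) : F :=
  if (k <= n)%N then qfact n / (qfact k * qfact (n - k)) else 0.
Definition qbinomZ (a b : int) : F :=
  match a, b with Posz a', Posz b' => qbinom a' b' | _, _ => 0 end.

(* partitions: a weakly decreasing sequence of positive parts summing to n;
   the number of parts is the size of the sequence *)
Definition is_par (n : nat) (s : seq nat) : bool :=
  [&& sorted geq s, all (fun x => 0 < x)%N s & sumn s == n].

Definition pmult (s : seq nat) (i : nat) : nat := count_mem i s.
Definition pconj (s : seq nat) (i : nat) : nat := count (fun x => i <= x)%N s.
(* tau(lambda) = sum_{i>=1} lambda'_i lambda'_{i+1}  (lambda'_i = 0 for i > |lambda|) *)
Definition ptau (s : seq nat) : nat :=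
  (\sum_(1 <= i < (sumn s).+1) pconj s i * pconj s i.+1)%N.
Definition qmultinom (k : nat) (s : seq nat) : F :=
  qfact k / \prod_(1 <= i < (sumn s).+1) qfact (pmult s i).

Definition expX (c : nat) : int := (c * (c - 1))%N.
Definition expY (c r s : nat) : int := (r * (c + r) + s * (c + s))%N.
Definition expZ (n m c r s R S : nat) : int :=
  (r%:Z * (n%:Z - c%:Z - R%:Z) + s%:Z * (m%:Z - c%:Z - S%:Z))%R.
Definition expW (n m c r s R S : nat) (a b l mu : seq nat) : int :=
  ((r * (R - r) + s * (S - s) + c * (n - R - c) + c * (m - S - c))%N%:Z
   - (ptau a + ptau b + ptau l + ptau mu)%N%:Z)%R.

Definition Kre (n m c r s R S : nat) (a b l mu : seq nat) : F :=
  q ^ (expX c + expY c r s + expZ n m c r s R S + expW n m c r s R S a b l mu)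
  * (qint (n * m) / (qint n * qint m)) * (qint (2 * c) / 2)
  * (qint (n - R) * qint (m - S) / (qint c ^+ 2))
  * qbinom n r * qbinom m s
  * qmultinom r a * qmultinom s b * qmultinom c l * qmultinom c mu.

Definition qbinom_m1 (R r : nat) : F :=
  if (R == 0%N) && (r == 0%N) then 1 else qbinomZ (R%:Z - 1) (r%:Z - 1).

Definition Nara1 (n m c r s R S : nat) : F :=
  q ^ (expX c + expY c r s + expZ n m c r s R S)
  * (qint (n * m) / (qint n * qint m)) * (qint (2 * c) / 2)
  * qbinom n r * qbinom m s * qbinom_m1 R r * qbinom_m1 S s
  * qbinomZ (n%:Z - R%:Z) c * qbinomZ (m%:Z - S%:Z) c.

Definition Nara2 (n m c r s : nat) : F :=
  q ^ (expX c + expY c r s)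
  * (qint (n * m) / (qint n * qint m)) * (qint (2 * c) / 2)
  * qbinom n r * qbinom m s * qbinom n (r + c) * qbinom m (s + c).

Definition Nara3 (n m c : nat) : F :=
  q ^ expX c
  * (qint (n * m) / (qint n * qint m)) * (qint (2 * c) / 2)
  * qbinomZ (2 * n)%N (n%:Z - c%:Z) * qbinomZ (2 * m)%N (m%:Z - c%:Z).

Definition Catq (n m : nat) : F :=
  qint (n * m) / (2 * qint (m + n)) * qbinom (2 * n) n * qbinom (2 * m) m.

(* sum of Kre over alpha in Par(R,r), beta in Par(S,s), lambda in Par(n-R,c),
   mu in Par(m-S,c); parts of a partition of N are <= N, so they are encoded as
   tuples over 'I_N.+1 *)
Definition KreSum (n m c r s R S : nat) : F :=
  \sum_(a : r.-tuple 'I_R.+1 | is_par R (map val a))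
  \sum_(b : s.-tuple 'I_S.+1 | is_par S (map val b))
  \sum_(l : c.-tuple 'I_(n - R).+1 | is_par (n - R) (map val l))
  \sum_(mu : c.-tuple 'I_(m - S).+1 | is_par (m - S) (map val mu))
    Kre n m c r s R S (map val a) (map val b) (map val l) (map val mu).

End QDefs.

(* the generic parameter q: the indeterminate of Q(q) *)
Definition Qq := {fraction {poly rat}}.
Definition qX : Qq := tofrac (('X : {poly rat})).

(* Main.v *)
Require Import Defs.
From mathcomp Require Import all_boot all_order all_algebra fraction.
From HB Require Import structures.
From mathcomp Require Import ring lra zify.
Set Implicit Arguments. Unset Strict Implicit. Unset Printing Implicit Defensive.
Import Order.TTheory GRing.Theory Num.Theory.
Local Open Scope ring_scope.

Section Q.
Variables (F : fieldType) (q : F).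
Hypothesis Hq : q != 0.
Hypothesis Hint : forall n, qint q n.+1 != 0.

Lemma qint0 : qint q 0%N = 0. Proof. by rewrite /qint big_ord0. Qed.
Lemma qintS n : qint q n.+1 = qint q n + q ^+ n.
Proof. by rewrite /qint big_ord_recr. Qed.
Lemma qintD a b : qint q (a + b) = qint q a + q ^+ a * qint q b.
Proof.
elim: b => [|b IH]; first by rewrite addn0 qint0 mulr0 addr0.
by rewrite addnS !qintS IH exprD; ring.
Qed.
Lemma qfact0 : qfact q 0%N = 1. Proof. by rewrite /qfact big_ord0. Qed.
Lemma qfactS n : qfact q n.+1 = qfact q n * qint q n.+1.
Proof. by rewrite /qfact big_ord_recr. Qed.
Lemma qfact_neq0 n : qfact q n != 0.
Proof. elim: n => [|n IH]; first by rewrite qfact0 oner_neq0.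
by rewrite qfactS mulf_neq0. Qed.

Lemma qbinom_gt n k : (n < k)%N -> qbinom q n k = 0.
Proof. by move=> h; rewrite /qbinom leqNgt h. Qed.
Lemma qbinom_fact n k : (k <= n)%N ->
  qbinom q n k * (qfact q k * qfact q (n - k)) = qfact q n.
Proof. by move=> h; rewrite /qbinom h divfK // mulf_neq0 // qfact_neq0. Qed.
Lemma qbinomE n k : (k <= n)%N ->
  qbinom q n k = qfact q n / (qfact q k * qfact q (n - k)).
Proof. by move=> h; rewrite /qbinom h. Qed.
Lemma qbinom_n0 n : qbinom q n 0%N = 1.
Proof. by rewrite qbinomE // qfact0 subn0 mul1r divff // qfact_neq0. Qed.
Lemma qbinom_nn n : qbinom q n n = 1.
Proof. by rewrite qbinomE // subnn qfact0 mulr1 divff // qfact_neq0. Qed.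
Lemma qbinom_sym n k : (k <= n)%N -> qbinom q n (n - k) = qbinom q n k.
Proof. by move=> h; rewrite !qbinomE ?leq_subr // subKn // (mulrC (qfact q k)). Qed.

Lemma qpascal n k :
  qbinom q n.+1 k.+1 = qbinom q n k + q ^+ k.+1 * qbinom q n k.+1.
Proof.
case: (ltngtP n k) => h.
- by rewrite !qbinom_gt ?mulr0 ?addr0 // ltnW // ltnS.
- have [d en] : exists d, n = (k.+1 + d)%N by exists (n - k.+1)%N; rewrite subnKC.
  subst n.
  rewrite !qbinomE; try lia.
  have -> : ((k.+1 + d).+1 - k.+1 = d.+1)%N by lia.
  have -> : ((k.+1 + d) - k = d.+1)%N by lia.
  have -> : ((k.+1 + d) - k.+1 = d)%N by lia.
  rewrite !qfactS.
  have e : qint q (k.+1 + d).+1 = qint q k.+1 + q ^+ k.+1 * qint q d.+1.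
    by rewrite -addnS qintD.
  rewrite e.
  have h1 := Hint k. have h2 := Hint d. have h3 := qfact_neq0 k.
  have h4 := qfact_neq0 d. have h5 := qfact_neq0 (k.+1 + d).
  field. by rewrite h1 h2 h3 h4.
- by subst; rewrite !qbinom_nn (qbinom_gt (ltnSn _)) mulr0 addr0.
Qed.

End Q.

Section Q2.
Variables (F : fieldType) (q : F).
Hypothesis Hq : q != 0.
Hypothesis Hint : forall n, qint q n.+1 != 0.

Lemma qvander a b K : qbinom q (a + b) K =
  \sum_(j < K.+1) q ^+ (j * (a - (K - j))) * qbinom q a (K - j) * qbinom q b j.
Proof.
elim: a K => [|a IH] K.
- rewrite add0n big_ord_recr /= subnn sub0n muln0 qbinom_n0 // expr0 !mul1r big1 ?add0r // => j _.
  by rewrite qbinom_gt ?mulr0 ?mul0r // subn_gt0 ltn_ord.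
case: K => [|K].
  by rewrite big_ord1 /= !qbinom_n0 // mul0n expr0 !mulr1.
rewrite addSn qpascal // !IH.
rewrite [in RHS]big_ord_recr [X in _ + _ * X]big_ord_recr /= mulrDr mulr_sumr addrA -big_split /=.
congr (_ + _).
  apply: eq_bigr => j _.
  have hj : (j <= K)%N by rewrite -ltnS ltn_ord.
  have -> : (K.+1 - j = (K - j).+1)%N by lia.
  have -> : (a.+1 - (K - j).+1 = a - (K - j))%N by lia.
  rewrite qpascal // mulrDr mulrDl; congr (_ + _).
  case: (ltnP a (K - j).+1) => ha.
    by rewrite (qbinom_gt q ha) !(mulr0, mul0r).
  have -> : (a - (K - j) = (a - (K - j).+1).+1)%N by lia.
  rewrite [q ^+ K.+1](_ : _ = q ^+ (j + (K - j).+1)); last by congr (_ ^+ _); lia.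
  rewrite mulnS !exprD; ring.
rewrite !subnn !qbinom_n0 // subn0 mulnS exprD; ring.
Qed.


Lemma qhock a n b : \sum_(k < n) q ^+ (a.+1 * (n - k.+1 - b)) * qbinom q k a
    * qbinom q (n - k.+1) b = qbinom q n (a + b).+1.
Proof.
elim: n b => [|n IH] b.
  by rewrite big_ord0 qbinom_gt.
rewrite big_ord_recr /= subnn.
case: b => [|b].
  have IH0 := IH 0%N; rewrite addn0 in IH0.
  rewrite addn0 qpascal // -IH0 mulr_sumr !qbinom_n0 // sub0n muln0 expr0 !mulr1 mul1r addrC.
  congr (_ + _); apply: eq_bigr => k _; rewrite !qbinom_n0 // !mulr1 !subn0.
  have hk : (k < n)%N := ltn_ord k.
  have -> : (n.+1 - k.+1 = (n - k.+1).+1)%N by lia.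
  by rewrite mulnS exprD mulrA.
rewrite (qbinom_gt q (ltn0Sn b)) mulr0 addr0 addnS qpascal // -IH -addnS -IH mulr_sumr -big_split /=.
apply: eq_bigr => k _.
have hk : (k < n)%N := ltn_ord k.
have -> : (n.+1 - k.+1 = (n - k.+1).+1)%N by lia.
rewrite qpascal // mulrDr; congr (_ + _).
case: (ltnP (n - k.+1) b.+1) => hb.
  by rewrite (qbinom_gt q hb) !(mulr0, mul0r).
have -> : ((n - k.+1).+1 - b.+1 = (n - k.+1 - b.+1).+1)%N by lia.
rewrite -[(a + b.+1).+1]addSn mulnS !exprD; ring.
Qed.

Lemma sumR n r c : \sum_(R < n.+1) q ^+ (r * (n - R - c)) * qbinom_m1 q R r
   * qbinom q (n - R) c = qbinom q n (r + c).
Proof.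
case: r => [|a].
  rewrite big_ord_recl /= /qbinom_m1 eqxx /= subn0 mul0n expr0 mul1r.
  by rewrite mul1r add0n big1 ?addr0 // => i _; rewrite mulr0 mul0r.
rewrite big_ord_recl /= /qbinom_m1 /= mulr0 mul0r add0r.
rewrite addSn -qhock.
apply: eq_bigr => k _.
by rewrite /bump /= add1n !subn1.
Qed.

End Q2.

Section Q3.
Variables (F : fieldType) (q : F).
Hypothesis Hq : q != 0.
Hypothesis Hint : forall n, qint q n.+1 != 0.

Lemma qint_geo k : (1 - q) * qint q k = 1 - q ^+ k.
Proof.
elim: k => [|k IH]; first by rewrite qint0 mulr0 expr0 subrr.
by rewrite qintS mulrDr IH exprS; ring.
Qed.

Lemma qabsorb M j : (j.+1 <= M)%N ->
  qbinom q M j * qint q (M - j) = qbinom q M j.+1 * qint q j.+1.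
Proof.
move=> h.
rewrite !qbinomE //; last by apply: ltnW.
have -> : (M - j = (M - j.+1).+1)%N by lia.
rewrite !qfactS.
have h1 := Hint j. have h2 := Hint (M - j.+1). have h3 := qfact_neq0 Hint j.
have h4 := qfact_neq0 Hint (M - j.+1).
field. by rewrite h1 h2 h3 h4.
Qed.

Definition zb N k := if (k <= N)%N then qbinom q (2 * N) (N - k) else 0.

Lemma zbS N k : zb N k.+1 * qint q (N + k.+1) = zb N k * qint q (N - k).
Proof.
rewrite /zb; case: (ltngtP k N) => h.
-   have := @qabsorb (2 * N) (N - k.+1). 
  have -> : ((N - k.+1).+1 = N - k)%N by lia.
  have -> : (2 * N - (N - k.+1) = N + k.+1)%N by lia.
  move=> ->; [by rewrite mulrC | lia].
- by rewrite !mul0r.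
- by subst; rewrite subnn qint0 !mulr0 mul0r.
Qed.

Lemma key_tel n m c : (c <= n)%N -> (c <= m)%N ->
  qint q (n + c) * qint q (m + c) - q ^+ (2 * c) * qint q (n - c) * qint q (m - c)
  = qint q (2 * c) * qint q (n + m).
Proof.
move=> hn hm.
have [x ->] : exists x, n = (c + x)%N by exists (n - c)%N; lia.
have [y ->] : exists y, m = (c + y)%N by exists (m - c)%N; lia.
have -> : (c + x + c = 2 * c + x)%N by lia.
have -> : (c + y + c = 2 * c + y)%N by lia.
have -> : (c + x + (c + y) = 2 * c + (x + y))%N by lia.
rewrite !addKn (qintD _ (2 * c) x) (qintD _ (2 * c) y) (qintD _ (2 * c) (x + y)) (qintD _ x y).
have e1 : q ^+ x = 1 - (1 - q) * qint q x by rewrite qint_geo; ring.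
have e2 : q ^+ (2 * c) = 1 - (1 - q) * qint q (2 * c) by rewrite qint_geo; ring.
rewrite e1 e2; ring.
Qed.

Lemma telesc n m : qint q (n + m) *
  \sum_(c < n.+1) q ^+ (c * (c - 1)) * qint q (2 * c) * zb n c * zb m c
  = qint q n * qint q m * qbinom q (2 * n) n * qbinom q (2 * m) m.
Proof.
pose B k := q ^+ (k * (k - 1)) * qint q (n + k) * qint q (m + k) * zb n k * zb m k.
have tel : forall c, qint q (n + m) *
   (q ^+ (c * (c - 1)) * qint q (2 * c) * zb n c * zb m c) = B c - B c.+1.
  move=> c; rewrite /B.
  have e : (c.+1 * (c.+1 - 1) = c * (c - 1) + 2 * c)%N.
    by case: c => [|c] //; rewrite subn1 /=; lia.
  rewrite e exprD.
  have -> : q ^+ (c * (c - 1)) * q ^+ (2 * c) * qint q (n + c.+1) * qint q (m + c.+1) * zb n c.+1 * zb m c.+1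
     = q ^+ (c * (c - 1)) * q ^+ (2 * c) * ((zb n c.+1 * qint q (n + c.+1)) * (zb m c.+1 * qint q (m + c.+1))) by ring.
  rewrite !zbS.
  case: (leqP c n) => hn; last first.
    by rewrite /zb [(c <= n)%N]leqNgt hn /= !(mulr0, mul0r) subr0.
  case: (leqP c m) => hm; last first.
    by rewrite /zb [(c <= m)%N]leqNgt hm /= !(mulr0, mul0r) subr0.
  transitivity (q ^+ (c * (c - 1)) * zb n c * zb m c * (qint q (n + c) * qint q (m + c)
     - q ^+ (2 * c) * qint q (n - c) * qint q (m - c))); last by ring.
  rewrite (key_tel hn hm); ring.
rewrite mulr_sumr.
under eq_bigr => c _ do rewrite tel -opprB.
rewrite sumrN -(big_mkord xpredT (fun c => B c.+1 - B c)) telescope_sumr // opprB.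
by rewrite /B /zb ltnn !leq0n !(mulr0, mul0r) subr0 !subn0 !addn0 mul0n expr0 mul1r.
Qed.

Lemma sumr3 n c : \sum_(r < n.+1) q ^+ (r * (c + r)) * qbinom q n r * qbinom q n (r + c)
  = zb n c.
Proof.
rewrite /zb; case: (leqP c n) => hc; last first.
  by rewrite big1 // => r _; rewrite (@qbinom_gt _ q n (r + c)) ?mulr0 //; lia.
rewrite mul2n -addnn qvander //.
have hK : ((n - c).+1 <= n.+1)%N by lia.
rewrite (big_ord_widen n.+1 (fun j => q ^+ (j * (n - (n - c - j))) * qbinom q n (n - c - j)
   * qbinom q n j) hK) [RHS]big_mkcond /=.
apply: eq_bigr => r _.
case: ifP => hr.
  have -> : (n - (n - c - r) = c + r)%N by lia.
  rewrite -subnDA (addnC c r) qbinom_sym; [ring | lia].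
by rewrite (@qbinom_gt _ q n (r + c)) ?mulr0 //; lia.
Qed.

End Q3.

Lemma pz (F : fieldType) (q : F) k : q ^ (Posz k) = q ^+ k. Proof. by []. Qed.

Lemma expZE n m c r s R S : (c <= n - R)%N -> (c <= m - S)%N -> (R <= n)%N -> (S <= m)%N ->
  expZ n m c r s R S = (r * (n - R - c) + s * (m - S - c))%N%:Z.
Proof.
move=> h1 h2 h3 h4; rewrite /expZ.
have -> : n%:Z - c%:Z - R%:Z = (n - R - c)%N%:Z by lia.
have -> : m%:Z - c%:Z - S%:Z = (m - S - c)%N%:Z by lia.
by rewrite -!PoszM -PoszD.
Qed.

Lemma qbZsub (F : fieldType) (q : F) n R c : (R <= n)%N -> qbinomZ q (n%:Z - R%:Z) c%:Z = qbinom q (n - R) c.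
Proof. by move=> h; rewrite subzn. Qed.


Section Q4.
Variables (F : fieldType) (q : F).
Hypothesis Hq : q != 0.
Hypothesis Hint : forall n, qint q n.+1 != 0.
Hypothesis H2 : (2 : F) != 0.


Lemma qbZ N c : qbinomZ q (2 * N)%N (N%:Z - c%:Z) = zb q N c.
Proof.
rewrite /zb; case: (leqP c N) => h.
  by rewrite subzn.
have -> : (N%:Z - c%:Z) = Negz (c - N.+1) by rewrite NegzE; lia.
by [].
Qed.

Lemma qint_neq0 k : (0 < k)%N -> qint q k != 0.
Proof. by case: k. Qed.

Lemma nara4 n m : \sum_(c < n.+1) Nara3 q n m c = Catq q n m.
Proof.
have E : forall c, Nara3 q n m c = (qint q (n * m) / (qint q n * qint q m)) / 2 *
   (q ^+ (c * (c - 1)) * qint q (2 * c) * zb q n c * zb q m c).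
  by move=> c; rewrite /Nara3 !qbZ /expX pz; ring.
under eq_bigr => c _ do rewrite E.
rewrite -mulr_sumr /Catq; clear E.
case: n => [|n]; first by rewrite mul0n !qint0 !(mulr0, mul0r, invr0).
case: m => [|m]; first by rewrite muln0 !qint0 !(mulr0, mul0r, invr0).
have T := telesc Hq Hint n.+1 m.+1.
have h1 := Hint n. have h2 := Hint m. have h3 : qint q (n.+1 + m.+1) != 0 by apply: Hint.
have -> : \sum_(c < n.+2) q ^+ (c * (c - 1)) * qint q (2 * c) * zb q n.+1 c * zb q m.+1 c
  = qint q n.+1 * qint q m.+1 * qbinom q (2 * n.+1) n.+1 * qbinom q (2 * m.+1) m.+1
    / qint q (n.+1 + m.+1).
  by rewrite -T mulrC mulKf.
rewrite (addnC m.+1 n.+1).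
field. by rewrite h1 h2 h3 H2.
Qed.


Lemma nara3 n m c : \sum_(r < n.+1) \sum_(s < m.+1) Nara2 q n m c r s = Nara3 q n m c.
Proof.
pose K := q ^+ (c * (c - 1)) * (qint q (n * m) / (qint q n * qint q m)) * (qint q (2 * c) / 2).
transitivity (K * ((\sum_(r < n.+1) q ^+ (r * (c + r)) * qbinom q n r * qbinom q n (r + c)) *
   (\sum_(s < m.+1) q ^+ (s * (c + s)) * qbinom q m s * qbinom q m (s + c)))).
  rewrite mulr_suml mulr_sumr; apply: eq_bigr => r _.
  rewrite !mulr_sumr; apply: eq_bigr => s _.
  rewrite /Nara2 /expX /expY -PoszD pz !exprD /K; ring.
rewrite !sumr3 // /Nara3 !qbZ /K /expX pz; ring.
Qed.

Lemma nara2 n m c r s : \sum_(R < n.+1) \sum_(S < m.+1) Nara1 q n m c r s R S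
   = Nara2 q n m c r s.
Proof.
pose K := q ^+ (c * (c - 1)) * q ^+ (r * (c + r) + s * (c + s)) * (qint q (n * m) / (qint q n * qint q m)) * (qint q (2 * c) / 2) * qbinom q n r * qbinom q m s.
transitivity (K * ((\sum_(R < n.+1) q ^+ (r * (n - R - c)) * qbinom_m1 q R r * qbinom q (n - R) c) *
   (\sum_(S < m.+1) q ^+ (s * (m - S - c)) * qbinom_m1 q S s * qbinom q (m - S) c))).
  rewrite mulr_suml mulr_sumr; apply: eq_bigr => R _.
  rewrite !mulr_sumr; apply: eq_bigr => S _.
  have hR : (R <= n)%N by rewrite -ltnS.
  have hS : (S <= m)%N by rewrite -ltnS.
  rewrite /Nara1 !qbZsub //.
  case: (leqP c (n - R)) => h1; last first.
    by rewrite !(qbinom_gt q h1) !(mulr0, mul0r).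
  case: (leqP c (m - S)) => h2; last first.
    by rewrite !(qbinom_gt q h2) !(mulr0, mul0r).
  rewrite expZE // /expX /expY -!PoszD pz !exprD /K !exprD; ring.
rewrite !sumR // /Nara2 /K /expX /expY -PoszD pz !exprD; ring.
Qed.

End Q4.

Local Close Scope ring_scope.

Definition dec (s : seq nat) := [seq x.-1 | x <- s & 1 < x].
Definition ext (k j : nat) (mu : seq nat) := map S mu ++ nseq (k - j) 1.

Lemma geq_trans : transitive geq.
Proof. by move=> y x z h1 h2; apply: leq_trans h2 h1. Qed.

Lemma par_pos N s : is_par N s -> all (fun x => 0 < x) s.
Proof. by case/and3P. Qed.
Lemma par_sorted N s : is_par N s -> sorted geq s.
Proof. by case/and3P. Qed.
Lemma par_sum N s : is_par N s -> sumn s = N.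
Proof. by case/and3P => _ _ /eqP. Qed.

Lemma mem_le_sumn x s : x \in s -> x <= sumn s.
Proof.
elim: s => [|y t IH] //=; rewrite inE => /orP [/eqP -> | h].
  exact: leq_addr.
by apply: leq_trans (IH h) _; apply: leq_addl.
Qed.

Lemma size_le_sumn s : all (fun x => 0 < x) s -> size s <= sumn s.
Proof.
elim: s => [|x t IH] //= /andP [hx ht].
by rewrite -add1n leq_add // IH.
Qed.

Lemma dec_sum s : all (fun x => 0 < x) s -> sumn (dec s) + size s = sumn s.
Proof.
elim: s => [|x t IH] //= /andP [hx ht].
rewrite /dec /=; case: ifP => h /=.
  rewrite -(IH ht) /dec; lia.
rewrite -(IH ht) /dec; lia.
Qed.

Lemma dec_pos s : all (fun x => 0 < x) (dec s).
Proof.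
elim: s => [|x t IH] //=; rewrite /dec /=; case: ifP => h //=.
by rewrite IH andbT -ltnS prednK // ltnW.
Qed.

Lemma size_dec s : size (dec s) = count (fun x => 1 < x) s.
Proof. by rewrite size_map size_filter. Qed.

Lemma size_dec_le s : size (dec s) <= size s.
Proof. by rewrite size_dec count_size. Qed.

Lemma dec_sorted s : sorted geq s -> sorted geq (dec s).
Proof.
rewrite !(sorted_pairwise geq_trans) /dec pairwise_map => h.
apply: sub_pairwise (pairwise_filter _ h).
by move=> x y /= hxy; lia.
Qed.

Lemma ext_dec s : sorted geq s -> all (fun x => 0 < x) s ->
  ext (size s) (size (dec s)) (dec s) = s.
Proof.
elim: s => [|x t IH] //= hs /andP [hx ht].
have st : sorted geq t := path_sorted hs.
rewrite /dec /=; case: ifP => h /=.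
  rewrite /ext /= subSS -/(dec t) prednK; last by apply: ltnW.
  by rewrite -[in RHS](IH st ht).
have x1 : x = 1 by lia.
subst x.
have ta : all (pred1 1) t.
  have := order_path_min geq_trans hs.
  move: ht; elim: t {IH hs st} => [|y u IHu] //= /andP [hy hu] /andP [hy1 hu1].
  by rewrite IHu // andbT; apply/eqP; lia.
have -> : [seq x.-1 | x <- t & 1 < x] = [::].
  by move: ta; elim: t {IH hs st ht} => [|y u IHu] //= /andP [/eqP -> /IHu].
by rewrite /ext /= (all_pred1P _ _ ta) size_nseq.
Qed.

Lemma dec_ext k j mu : all (fun x => 0 < x) mu -> dec (ext k j mu) = mu.
Proof.
move=> h; rewrite /dec /ext filter_cat map_cat.
have -> : [seq x <- nseq (k - j) 1 | 1 < x] = [::] by elim: (k - j).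
rewrite cats0.
by elim: mu h => [|x t IH] //= /andP [hx ht]; rewrite ltnS hx /= IH.
Qed.

Lemma ext_par M mu j k : is_par M mu -> size mu = j -> j <= k ->
  is_par (M + k) (ext k j mu) && (size (ext k j mu) == k).
Proof.
move=> hp hs hjk.
have pos := par_pos hp. have so := par_sorted hp. have su := par_sum hp.
apply/andP; split; last by rewrite /ext size_cat size_map size_nseq; apply/eqP; lia.
apply/and3P; split.
- rewrite (sorted_pairwise geq_trans) pairwise_cat pairwise_map.
  rewrite (sorted_pairwise geq_trans) in so.
  apply/and3P; split.
  + apply/allrelP => x y /mapP [z _ ->] /nseqP [-> _] /=; done.
  + by apply: sub_pairwise so.
  + by elim: (k - j) => [|i IH] //=; rewrite IH andbT; apply/allP => z /nseqP [-> _].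
- rewrite /ext all_cat; apply/andP; split.
    by apply/allP => x /mapP [z _ ->].
  by apply/allP => x /nseqP [-> _].
- rewrite /ext sumn_cat sumn_nseq.
  have -> : sumn (map S mu) = sumn mu + size mu.
    by elim: (mu) => [|x t IH] //=; rewrite IH; lia.
  apply/eqP; lia.
Qed.

Lemma pconj1 s : all (fun x => 0 < x) s -> pconj s 1 = size s.
Proof. by move=> h; rewrite /pconj; apply/eqP; rewrite -all_count. Qed.

Lemma pconj2 s : pconj s 2 = size (dec s).
Proof. by rewrite size_dec. Qed.

Lemma pconjS s i : 0 < i -> pconj s i.+1 = pconj (dec s) i.
Proof.
move=> hi; rewrite /pconj /dec count_map count_filter.
by apply: eq_count => x /=; apply/idP/idP; lia.
Qed.

Lemma pmult1 s : all (fun x => 0 < x) s -> pmult s 1 = size s - size (dec s).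
Proof.
rewrite size_dec /pmult; elim: s => [|x t IH] //= /andP [hx ht].
rewrite IH //; have := count_size (fun x => 1 < x) t.
case: (ltngtP x 1) => h; try lia.
Qed.

Lemma pmultS s i : 0 < i -> pmult s i.+1 = pmult (dec s) i.
Proof.
move=> hi; rewrite /pmult /dec count_map count_filter.
by apply: eq_count => x /=; apply/idP/idP; lia.
Qed.

Lemma pconj_big s i : sumn s < i -> pconj s i = 0.
Proof.
move=> h; rewrite /pconj; apply/eqP; rewrite -leqn0 leqNgt -has_count.
apply/hasP => [[x /mem_le_sumn hx hix]]; lia.
Qed.

Lemma pmult_big s i : sumn s < i -> pmult s i = 0.
Proof.
move=> h; rewrite /pmult; apply/eqP; rewrite -leqn0 leqNgt -has_count.
apply/hasP => [[x /mem_le_sumn hx /eqP hix]]; lia.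
Qed.

Lemma ptau_ext s M : sumn s <= M ->
  ptau s = \sum_(1 <= i < M.+1) pconj s i * pconj s i.+1.
Proof.
move=> h; rewrite /ptau (@big_cat_nat _ _ _ (sumn s).+1 1 M.+1) //=.
rewrite [X in _ = _ + X]big1_seq ?addn0 // => i /andP [_].
by rewrite mem_index_iota => /andP [hi _]; rewrite pconj_big.
Qed.

Lemma ptau_dec s : all (fun x => 0 < x) s -> 0 < sumn s ->
  ptau s = size s * size (dec s) + ptau (dec s).
Proof.
move=> hp hs.
have hd := dec_sum hp.
have hsz : 0 < size s by move: hs; case: (s).
rewrite (@ptau_ext (dec s) (sumn s).-1); last by lia.
rewrite {1}/ptau big_ltn; last by rewrite ltnS.
rewrite pconj1 // pconj2; congr (_ + _).
rewrite big_add1 /= prednK //.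
apply: eq_big_nat => i /andP [hi _].
by rewrite !pconjS.
Qed.

Local Open Scope ring_scope.

Definition plist N k : seq (seq nat) :=
  [seq s <- map (fun a : k.-tuple 'I_N.+1 => map val a) (index_enum (k.-tuple 'I_N.+1)) | is_par N s].

Lemma plist_uniq N k : uniq (plist N k).
Proof.
rewrite filter_uniq // map_inj_uniq ?index_enum_uniq //.
by move=> a b /(inj_map val_inj) /val_inj.
Qed.

Lemma mem_plist N k s : (s \in plist N k) = is_par N s && (size s == k).
Proof.
rewrite mem_filter; apply/andP/andP => [[hp /mapP [a _ es]] | [hp /eqP hs]].
  by subst s; rewrite hp size_map size_tuple.
split => //.
have st : size (map (@inord N) s) == k by rewrite size_map hs.
apply/mapP; exists (Tuple st); first by rewrite mem_index_enum.
rewrite /= -map_comp map_id_in // => x hx /=.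
rewrite inordK // ltnS -(par_sum hp); exact: mem_le_sumn.
Qed.

Section QP.
Variables (F : fieldType) (q : F).
Hypothesis Hq : q != 0.
Hypothesis Hint : forall n, qint q n.+1 != 0.

Lemma tsum_plist N k (G : seq nat -> F) :
  \sum_(a : k.-tuple 'I_N.+1 | is_par N (map val a)) G (map val a)
  = \sum_(s <- plist N k) G s.
Proof. by rewrite /plist big_filter big_map. Qed.

Lemma plist_split N k j (G : seq nat -> F) : (j <= k)%N -> (k <= N)%N ->
  \sum_(s <- plist N k | size (dec s) == j) G s
  = \sum_(mu <- plist (N - k) j) G (ext k j mu).
Proof.
move=> hjk hkN.
rewrite -[in LHS]big_filter -(big_map (ext k j) xpredT G); apply: perm_big; apply: uniq_perm.
- by rewrite filter_uniq // plist_uniq.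
- rewrite map_inj_in_uniq ?plist_uniq // => x y.
  rewrite !mem_plist => /andP [/par_pos hx _] /andP [/par_pos hy _] e.
  by rewrite -(dec_ext k j hx) e dec_ext.
move=> s; rewrite mem_filter mem_plist; apply/idP/idP.
  case/and3P => /eqP hdj hp /eqP hsz.
  apply/mapP; exists (dec s).
    rewrite mem_plist hdj eqxx andbT.
    apply/and3P; split.
    - exact: dec_sorted (par_sorted hp).
    - exact: dec_pos.
    - by have := dec_sum (par_pos hp); rewrite (par_sum hp) hsz => h; apply/eqP; lia.
  by rewrite -hdj -hsz ext_dec // ?(par_sorted hp) ?(par_pos hp).
case/mapP => mu; rewrite mem_plist => /andP [hp /eqP hs] ->.
have := ext_par hp hs hjk; rewrite subnK // => /andP [-> ->].
by rewrite dec_ext ?(par_pos hp) // hs eqxx.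
Qed.

Lemma plist_rec N k (G : seq nat -> F) : (0 < k)%N -> (k <= N)%N ->
  \sum_(s <- plist N k) G s
  = \sum_(j < k.+1) \sum_(mu <- plist (N - k) j) G (ext k j mu).
Proof.
move=> hk hkN.
transitivity (\sum_(s <- plist N k) \sum_(j < k.+1) (if size (dec s) == j then G s else 0)).
  apply: eq_big_seq => s; rewrite mem_plist => /andP [hp /eqP hs].
  have hd : (size (dec s) < k.+1)%N by rewrite ltnS -hs size_dec_le.
  rewrite -big_mkcond (big_pred1 (Ordinal hd)) // => j /=.
rewrite exchange_big; apply: eq_bigr => j _.
rewrite -big_mkcond plist_split //.
by rewrite -ltnS ltn_ord.
Qed.

Definition wt N k s := q ^ ((k * (N - k))%N%:Z - (ptau s)%:Z) * qmultinom q k s.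

Lemma prod_ext t M : (sumn t <= M)%N ->
  \prod_(1 <= i < M.+1) qfact q (pmult t i) = \prod_(1 <= i < (sumn t).+1) qfact q (pmult t i).
Proof.
move=> h; rewrite (@big_cat_nat _ _ _ (sumn t).+1 1 M.+1) //=.
rewrite [X in _ * X = _]big1_seq ?mulr1 // => i /andP [_].
by rewrite mem_index_iota => /andP [hi _]; rewrite pmult_big // qfact0.
Qed.

Lemma qmult_ext N k j mu : (0 < k)%N -> (k <= N)%N -> (j <= k)%N -> mu \in plist (N - k) j ->
  qmultinom q k (ext k j mu) = qbinom q k j * qmultinom q j mu.
Proof.
move=> hk hkN hjk; rewrite mem_plist => /andP [hp /eqP hs].
have := ext_par hp hs hjk; rewrite subnK // => /andP [hp' /eqP hs'].
have pos := par_pos hp'.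
have dm : dec (ext k j mu) = mu by rewrite dec_ext // (par_pos hp).
rewrite /qmultinom (par_sum hp').
rewrite big_ltn; last by rewrite ltnS; lia.
rewrite pmult1 // dm hs hs' big_add1 /=.
have -> : \prod_(1 <= i < N) qfact q (pmult (ext k j mu) i.+1)
   = \prod_(1 <= i < N) qfact q (pmult mu i).
  by apply: eq_big_nat => i /andP [hi _]; rewrite pmultS // dm.
have -> : \prod_(1 <= i < N) qfact q (pmult mu i) = \prod_(1 <= i < (sumn mu).+1) qfact q (pmult mu i).
  rewrite -(@prod_ext mu N.-1); first by rewrite prednK //; lia.
  by rewrite (par_sum hp); lia.
rewrite qbinomE //.
set D := \prod_(_ <= _ < _) _.
have hD : D != 0.
  rewrite /D prodf_seq_neq0; apply/allP => i _ /=; exact: qfact_neq0.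
have h1 := qfact_neq0 Hint j. have h2 := qfact_neq0 Hint (k - j).
by field; rewrite hD h1 h2.
Qed.


Lemma wt_ext N k j mu : (0 < k)%N -> (k <= N)%N -> (j <= k)%N -> mu \in plist (N - k) j ->
  wt N k (ext k j mu) = q ^+ ((k - j) * (N - k - j)) * qbinom q k j * wt (N - k) j mu.
Proof.
move=> hk hkN hjk hmu.
have := hmu; rewrite mem_plist => /andP [hp /eqP hs].
have := ext_par hp hs hjk; rewrite subnK // => /andP [hp' /eqP hs'].
have dm : dec (ext k j mu) = mu by rewrite dec_ext // (par_pos hp).
have hjN : (j <= N - k)%N by rewrite -hs -(par_sum hp) size_le_sumn // (par_pos hp).
rewrite /wt (@qmult_ext N k j mu) // ptau_dec ?(par_pos hp') ?(par_sum hp'); last by lia.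
rewrite dm hs' hs.
have -> : (k * (N - k))%N%:Z - (k * j + ptau mu)%N%:Z
   = ((k - j) * (N - k - j))%N%:Z + ((j * (N - k - j))%N%:Z - (ptau mu)%:Z).
  have e : (k * (N - k) = (k - j) * (N - k - j) + j * (N - k - j) + k * j)%N.
    have -> : (N - k = (N - k - j) + j)%N by lia.
    have -> : (k = (k - j) + j)%N by lia.
    rewrite !addnK; ring.
  rewrite e !PoszD; ring.
rewrite expfzDr // pz. ring. by [].
Qed.

Definition PL N k := \sum_(s <- plist N k) wt N k s.

Lemma qbm1_00 : qbinom_m1 q 0 0 = 1.
Proof. by []. Qed.
Lemma qbm1_N0 N : (0 < N)%N -> qbinom_m1 q N 0 = 0.
Proof. by case: N. Qed.
Lemma qbm1_0k k : (0 < k)%N -> qbinom_m1 q 0 k = 0.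
Proof. by case: k. Qed.
Lemma qbm1_pos N k : (0 < N)%N -> (0 < k)%N -> qbinom_m1 q N k = qbinom q N.-1 k.-1.
Proof. by case: N => // N; case: k => // k _ _; rewrite /qbinom_m1 /= !subn1.
Qed.

Lemma PL_nil N k : (N < k)%N \/ (k == 0%N) && (0 < N)%N -> PL N k = 0.
Proof.
move=> h; rewrite /PL big_seq big1 // => s; rewrite mem_plist => /andP [hp /eqP hs].
have := size_le_sumn (par_pos hp); rewrite (par_sum hp) hs => hkN.
case: h => [h|/andP [/eqP hk hN]]; first by lia.
rewrite hk in hs; move: hp; case: s hs {hkN} => // _.
by move=> /and3P [_ _ /eqP h]; move: h hN => /= <-.
Qed.

Lemma PL00 : PL 0 0 = 1.
Proof.
rewrite /PL (@perm_big _ _ _ _ _ [:: [::]]); last first.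
  apply: uniq_perm => //; first exact: plist_uniq.
  move=> s; rewrite mem_plist inE; case: s => [|x t] /=; first by rewrite !eqxx. by rewrite andbF.
rewrite big_seq1 /wt /qmultinom /ptau !big_geq //= qfact0 divr1.
by rewrite mul1r.
Qed.

Lemma PL_val N k : PL N k = qbinom_m1 q N k.
Proof.
elim/ltn_ind: N k => N IH k.
case: k => [|k'].
  case: N IH => [|N] IH; first by rewrite PL00.
  by rewrite PL_nil ?qbm1_N0 //; right.
case: (ltnP N k'.+1) => hN.
  rewrite PL_nil; last by left.
  case: N IH hN => [|N] IH hN; first by rewrite qbm1_0k.
  by rewrite qbm1_pos // qbinom_gt.
set k := k'.+1.
have hk : (0 < k)%N by [].
transitivity (\sum_(j < k.+1) q ^+ ((k - j) * (N - k - j)) * qbinom q k j * PL (N - k) j).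
  rewrite /PL plist_rec //; apply: eq_bigr => j _.
  rewrite mulr_sumr; apply: eq_big_seq => mu hmu.
  by rewrite wt_ext // -ltnS ltn_ord.
have hlt : (N - k < N)%N by lia.
under eq_bigr => j _ do rewrite IH //.
case E: (N - k)%N => [|N'].
  rewrite big_ord_recl /= big1 ?addr0.
    have -> : N = k by lia.
    by rewrite subn0 muln0 expr0 mul1r qbinom_n0 // qbm1_00 mulr1 qbm1_pos // qbinom_nn.
  by move=> j _; rewrite qbm1_0k ?mulr0.
rewrite big_ord_recl /= qbm1_N0 // mulr0 add0r.
under eq_bigr => j _ do rewrite qbm1_pos //=.
rewrite qbm1_pos; last by lia.
rewrite /= (_ : N.-1 = N' + k)%N; last by lia.
rewrite qvander //.
rewrite (reindex_inj rev_ord_inj) /=.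
apply: eq_bigr => i _.
rewrite /bump /= add1n subSS.
have hi : (i < k)%N := ltn_ord i.
have -> : (k - i.+1 = k' - i)%N by [].
rewrite add0n.
have -> : (k - (k' - i).+1 = i)%N by lia.
have -> : ((k' - i).+1 = k - i)%N by lia.
rewrite qbinom_sym; last by lia.
ring. lia.
Qed.

End QP.

Section QK.
Variables (F : fieldType) (q : F).
Hypothesis Hq : q != 0.
Hypothesis Hint : forall n, qint q n.+1 != 0.

Lemma sum4 (I1 I2 I3 I4 : finType) (P1 : pred I1) (P2 : pred I2) (P3 : pred I3) (P4 : pred I4)
  (f : I1 -> F) (g : I2 -> F) (h : I3 -> F) (k : I4 -> F) (K : F) :
  \sum_(a | P1 a) \sum_(b | P2 b) \sum_(l | P3 l) \sum_(mu | P4 mu) K * (f a * (g b * (h l * k mu)))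
  = K * ((\sum_(a | P1 a) f a) * ((\sum_(b | P2 b) g b) * ((\sum_(l | P3 l) h l) * (\sum_(mu | P4 mu) k mu)))).
Proof.
rewrite mulr_suml mulr_sumr; apply: eq_bigr => a _.
rewrite mulr_suml mulr_sumr mulr_sumr; apply: eq_bigr => b _.
rewrite mulr_suml mulr_sumr mulr_sumr mulr_sumr; apply: eq_bigr => l _.
by rewrite !mulr_sumr; apply: eq_bigr => mu _.
Qed.

Lemma absorb2 N c : (0 < c)%N -> (c <= N)%N ->
  qint q N * qbinom q N.-1 c.-1 = qint q c * qbinom q N c.
Proof.
case: c => // c _; case: N => // N hcN.
rewrite /= !qbinomE //.
have -> : (N - c = N.+1 - c.+1)%N by [].
rewrite !qfactS.
have h1 := Hint c. have h2 := Hint N. have h3 := qfact_neq0 Hint c.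
have h4 := qfact_neq0 Hint (N.+1 - c.+1). have h5 := qfact_neq0 Hint N.
by field; rewrite h1 h3 h4.
Qed.

Lemma PS_val N k : \sum_(a : k.-tuple 'I_N.+1 | is_par N (map val a)) wt q N k (map val a)
  = qbinom_m1 q N k.
Proof. rewrite tsum_plist; exact: (PL_val Hq Hint N k). Qed.

Lemma tuple_par N k (a : k.-tuple 'I_N.+1) : is_par N (map val a) -> (k <= N)%N.
Proof.
move=> h; have := size_le_sumn (par_pos h).
by rewrite (par_sum h) size_map size_tuple.
Qed.

Lemma kre_main n m c r s R S : (R <= n)%N -> (S <= m)%N ->
  KreSum q n m c r s R S = Nara1 q n m c r s R S.
Proof.
move=> hR hS.
pose K := q ^+ (c * (c - 1) + (r * (c + r) + s * (c + s)) + (r * (n - R - c) + s * (m - S - c)))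
  * (qint q (n * m) / (qint q n * qint q m)) * (qint q (2 * c) / 2)
  * (qint q (n - R) * qint q (m - S) / qint q c ^+ 2) * qbinom q n r * qbinom q m s.
transitivity (\sum_(a : r.-tuple 'I_R.+1 | is_par R (map val a))
  \sum_(b : s.-tuple 'I_S.+1 | is_par S (map val b))
  \sum_(l : c.-tuple 'I_(n - R).+1 | is_par (n - R) (map val l))
  \sum_(mu : c.-tuple 'I_(m - S).+1 | is_par (m - S) (map val mu))
   K * (wt q R r (map val a) * (wt q S s (map val b) * (wt q (n - R) c (map val l)
     * wt q (m - S) c (map val mu))))).
  apply: eq_bigr => a ha; apply: eq_bigr => b hb; apply: eq_bigr => l hl; apply: eq_bigr => mu hmu.
  have h1 := tuple_par ha. have h2 := tuple_par hb.
  have h3 := tuple_par hl. have h4 := tuple_par hmu.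
  rewrite /Kre /wt expZE //; try lia.
  rewrite /expW /expX /expY.
  set ta := ptau _. set tb := ptau _. set tl := ptau _. set tm := ptau _.
  have -> : (c * (c - 1))%N%:Z + (r * (c + r) + s * (c + s))%N%:Z +
    (r * (n - R - c) + s * (m - S - c))%N%:Z +
    ((r * (R - r) + s * (S - s) + c * (n - R - c) + c * (m - S - c))%N%:Z - (ta + tb + tl + tm)%N%:Z)
    = (c * (c - 1) + (r * (c + r) + s * (c + s)) + (r * (n - R - c) + s * (m - S - c)))%N%:Z
      + (((r * (R - r))%N%:Z - ta%:Z) + (((s * (S - s))%N%:Z - tb%:Z)
        + (((c * (n - R - c))%N%:Z - tl%:Z) + ((c * (m - S - c))%N%:Z - tm%:Z)))).
    rewrite !PoszD; ring.
  rewrite !expfzDr // pz /K; ring.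
rewrite sum4 !PS_val /K; clear K.
case: c => [|c].
  by rewrite /Nara1 muln0 qint0 !(mulr0, mul0r).
case: (leqP c.+1 (n - R)) => hc1; last first.
  rewrite /Nara1 (qbZsub _ _ hR) (qbinom_gt q hc1).
  case: (n - R)%N hc1 => [|N] hc1; first by rewrite qbm1_0k // !(mulr0, mul0r).
  by rewrite [qbinom_m1 q N.+1 c.+1]qbm1_pos // (qbinom_gt q (hc1 : (N < c)%N)) !(mulr0, mul0r).
case: (leqP c.+1 (m - S)) => hc2; last first.
  rewrite /Nara1 (qbZsub _ _ hS) (qbinom_gt q hc2).
  case: (m - S)%N hc2 => [|N] hc2; first by rewrite qbm1_0k // !(mulr0, mul0r).
  by rewrite [qbinom_m1 q N.+1 c.+1]qbm1_pos // (qbinom_gt q (hc2 : (N < c)%N)) !(mulr0, mul0r).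
rewrite /Nara1 !qbZsub // expZE // /expX /expY -!PoszD pz.
rewrite [qbinom_m1 q (n - R) c.+1]qbm1_pos; try lia.
rewrite [qbinom_m1 q (m - S) c.+1]qbm1_pos; try lia.
have a1 := absorb2 (ltn0Sn c) hc1. have a2 := absorb2 (ltn0Sn c) hc2.
have hc := Hint c.
rewrite -[qbinom q (n - R) c.+1](mulKf hc) -a1.
rewrite -[qbinom q (m - S) c.+1](mulKf hc) -a2.
set C := qint q (n * m) / _. set D := qint q (2 * c.+1) / 2.
field; by rewrite hc.
Qed.

End QK.

Lemma qX_neq0 : qX != 0.
Proof. by rewrite /qX tofrac_eq0 polyX_eq0. Qed.

Lemma qX_int n : qint qX n.+1 != 0.
Proof.
have -> : qint qX n.+1 = tofrac (\sum_(i < n.+1) ('X : {poly rat}) ^+ i).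
  by rewrite rmorph_sum; apply: eq_bigr => i _; rewrite rmorphXn.
rewrite tofrac_eq0; apply/negP => /eqP h.
have := congr1 (fun p : {poly rat} => p.[1]) h.
rewrite horner_sum /= horner0.
under eq_bigr => i _ do rewrite hornerXn expr1n.
by rewrite sumr_const card_ord => /eqP; rewrite pnatr_eq0.
Qed.

Lemma two_neq0 : (2 : Qq) != 0.
Proof.
have -> : (2 : Qq) = tofrac (2 : {poly rat}) by rewrite rmorph_nat.
by rewrite tofrac_eq0 -polyC_natr polyC_eq0 pnatr_eq0.
Qed.

Theorem theorem3p6 :
  (forall n m c r s R S : nat,
      (R <= n)%N -> (S <= m)%N ->
      KreSum qX n m c r s R S = Nara1 qX n m c r s R S) /\
  (forall n m c r s : nat,
      \sum_(R < n.+1) \sum_(S < m.+1) Nara1 qX n m c r s R S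
      = Nara2 qX n m c r s) /\
  (forall n m c : nat,
      \sum_(r < n.+1) \sum_(s < m.+1) Nara2 qX n m c r s = Nara3 qX n m c) /\
  (forall n m : nat,
      \sum_(c < n.+1) Nara3 qX n m c = Catq qX n m).
Proof.
split; first by move=> n m c r s R S hR hS; exact: (kre_main qX_neq0 qX_int).
split; first exact: (nara2 qX_neq0 qX_int).
split; first exact: (nara3 qX_neq0 qX_int two_neq0).
exact: (nara4 qX_neq0 qX_int two_neq0).
Qed.
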